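(* Let $E$ be a real Banach space and let $\mathcal F\subseteq H[E]_+$ be upwards directed and pointwise bounded. Define $g:E^*\to\mathbb R_+$ by $g(x^* )=\sup\{f(x^* ):f\in\mathcal F\}$. Then $g\in H[E]_+$ and $\|g\|_{FBL[E]}=\sup\{\|f\|_{FBL[E]}:f\in\mathcal F\}$ (both sides possibly infinite).
   Context: For a real Banach space $E$ with dual $E^*$ and closed unit ball $B_E$, let $H[E]$ be the vector space of all positively homogeneous functions $f:E^*\to\mathbb R$ ($f(\lambda x^* )=\lambda f(x^* )$ for $\lambda>0$), ordered pointwise; $H[E]_+$ denotes its nonnegative elements. For $f\in H[E]$ put $\|f\|_{FBL[E]}:=\sup\{\sum_{k=1}^n|f(x_k^* )| : n\in\mathbb N,\ x_1^*,\dots,x_n^*\in E^*,\ \sup_{x\in B_E}\sum_{k=1}^n|x_k^*(x)|\le 1\}\in[0,\infty]$. *)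

(* Defs.v *)
From HB Require Import structures.
From mathcomp Require Import all_boot all_order all_algebra.
From mathcomp Require Import all_classical all_reals all_analysis.
Set Implicit Arguments. Unset Strict Implicit. Unset Printing Implicit Defensive.
Import Order.TTheory GRing.Theory Num.Theory.
Import numFieldNormedType.Exports.
Local Open Scope classical_set_scope.
Local Open Scope ring_scope.

Record dual (R : realType) (E : normedModType R) := Dual {
  dfun :> E -> R;
  dfun_linear : forall (a : R) (u v : E), dfun (a *: u + v) = a * dfun u + dfun v;
  dfun_cont : continuous dfun }.

Section DualScale.
Context (R : realType) (E : normedModType R).

Lemma dual_scale_linear (c : R) (x : dual E) (a : R) (u v : E) :
  c * x (a *: u + v) = a * (c * x u) + c * x v.
Proof. by rewrite dfun_linear mulrDr mulrCA. Qed.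

Lemma dual_scale_cont (c : R) (x : dual E) : continuous (fun u : E => c * x u).
Proof. move=> u; apply: cvgM; [exact: cvg_cst | exact: dfun_cont]. Qed.

Definition dual_scale (c : R) (x : dual E) : dual E :=
  @Dual R E (fun u : E => c * x u) (@dual_scale_linear c x) (@dual_scale_cont c x).
End DualScale.

Definition pos_homogeneous (R : realType) (E : normedModType R) (f : dual E -> R) :=
  forall (lam : R) (x : dual E), 0 < lam -> f (dual_scale lam x) = lam * f x.

Definition H_plus (R : realType) (E : normedModType R) : set (dual E -> R) :=
  [set f | pos_homogeneous f /\ forall x, 0 <= f x].

Definition fbl_norm (R : realType) (E : normedModType R) (f : dual E -> R) : \bar R :=
  ereal_sup [set r : \bar R | exists (n : nat) (xs : 'I_n -> dual E),
     (forall x : E, `|x| <= 1 -> \sum_(k < n) `|xs k x| <= 1) /\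
     r = ((\sum_(k < n) `|f (xs k)|)%:E)].

(* upwards directed (a directed family is nonempty), pointwise order *)
Definition fam_upward_directed (R : realType) (E : normedModType R) (F : set (dual E -> R)) :=
  F !=set0 /\
  forall f1 f2, F f1 -> F f2 ->
    exists2 f3, F f3 & forall x, f1 x <= f3 x /\ f2 x <= f3 x.

Definition fam_pointwise_bounded (R : realType) (E : normedModType R) (F : set (dual E -> R)) :=
  forall x : dual E, exists M : R, forall f, F f -> `|f x| <= M.

(* Main.v *)
Require Import Defs.
From HB Require Import structures.
From mathcomp Require Import all_boot all_order all_algebra.
From mathcomp Require Import all_classical all_reals all_analysis.
Import Order.TTheory GRing.Theory Num.Theory.
Import numFieldNormedType.Exports.
Local Open Scope classical_set_scope.
Local Open Scope ring_scope.

Section Aux.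
Variables (R : realType) (E : normedModType R) (F : set (dual E -> R)).
Hypotheses (HF : F `<=` @H_plus R E) (HD : fam_upward_directed F)
  (HB : fam_pointwise_bounded F).

Lemma S_has_sup (x : dual E) : has_sup [set f x | f in F].
Proof.
split.
  by case: HD => [[f Ff] _]; exists (f x); exists f.
have [M HM] := HB x; exists M => _ [f Ff <-].
exact: le_trans (ler_norm _) (HM f Ff).
Qed.

Lemma le_g f (x : dual E) : F f -> f x <= sup [set f x | f in F].
Proof. by move=> Ff; apply: ub_le_sup; [case: (S_has_sup x)|exists f]. Qed.

Lemma g_ge0 (x : dual E) : 0 <= sup [set f x | f in F].
Proof.
case: HD => [[f Ff] _]; apply: le_trans (le_g _ x Ff).
exact: (HF _ Ff).2.
Qed.

Lemma approx (eps : R) : 0 < eps -> forall n (xs : 'I_n -> dual E),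
  exists2 f, F f & forall k, sup [set f (xs k) | f in F] - eps < f (xs k).
Proof.
move=> e0; elim=> [|n IH] xs.
  by case: HD => [[f Ff] _]; exists f => // -[].
have [f1 Ff1 H1] := IH (fun k => xs (lift ord0 k)).
have [y [f2 Ff2 <-] H2] := sup_adherent e0 (S_has_sup (xs ord0)).
have [f3 Ff3 H3] := HD.2 _ _ Ff1 Ff2.
exists f3 => // k; case: (unliftP ord0 k) => [j ->|->].
  exact: lt_le_trans (H1 j) (H3 _).1.
exact: lt_le_trans H2 (H3 _).2.
Qed.

End Aux.

Theorem lemma4p2 (R : realType) (E : completeNormedModType R)
  (F : set (dual E -> R)) :
  F `<=` @H_plus R E -> fam_upward_directed F -> fam_pointwise_bounded F ->
  let g := fun x : dual E => sup [set f x | f in F] in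
  @H_plus R E g /\ fbl_norm g = ereal_sup [set fbl_norm f | f in F].
Proof.
move=> HF HD HB g; split.
  split; last by move=> x; exact: g_ge0.
  move=> lam x lam0; rewrite /g.
  apply/le_anti/andP; split.
    apply: ge_sup; first by case: (@S_has_sup _ _ _ HD HB (dual_scale lam x)).
    move=> _ [f Ff <-]; rewrite (HF _ Ff).1 // ler_pM2l //; exact: le_g.
  rewrite mulrC -ler_pdivlMr //.
  apply: ge_sup; first by case: (@S_has_sup _ _ _ HD HB x).
  move=> _ [f Ff <-]; rewrite ler_pdivlMr // mulrC -(HF _ Ff).1 //.
  exact: le_g.
apply/le_anti/andP; split.
  apply: ge_ereal_sup => _ [n [xs [Hxs ->]]].
  apply/lee_addgt0Pr => e e0.
  have epos : 0 < e / n.+1%:R by rewrite divr_gt0.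
  have [f Ff Hf] := @approx _ _ _ HD HB _ epos _ xs.
  have Hle : ((\sum_(k < n) `|f (xs k)|)%:E <= ereal_sup [set fbl_norm f | f in F])%E.
    apply: (le_trans _ (ereal_sup_ubound (x := fbl_norm f) _)); last by exists f.
    apply: ereal_sup_ubound; exists n, xs; split => //.
  apply: le_trans (leeD2r _ Hle); rewrite -EFinD lee_fin.
  apply: (le_trans (y := \sum_(k < n) (`|f (xs k)| + e / n.+1%:R))).
    apply: ler_sum => k _; rewrite ger0_norm; last exact: g_ge0.
    rewrite -lerBlDr; apply: ltW; apply: lt_le_trans (Hf k) _; exact: ler_norm.
  rewrite big_split /= lerD2l sumr_const card_ord.
  apply: (le_trans (y := e / n.+1%:R *+ n.+1)); first by rewrite [X in _ <= X]mulrSr lerDl; exact: ltW.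
  by rewrite -mulr_natr divfK // pnatr_eq0.
apply: ge_ereal_sup => _ [f Ff <-].
apply: ge_ereal_sup => _ [n [xs [Hxs ->]]].
apply: (le_trans _ (ereal_sup_ubound (x := (\sum_(k < n) `|g (xs k)|)%:E) _)).
  rewrite lee_fin; apply: ler_sum => k _.
  rewrite !ger0_norm; [exact: le_g | exact: g_ge0 | exact: (HF _ Ff).2].
by exists n, xs.
Qed.
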